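(* Let $\rho_b<\rho_h$ with $\rho_b+\rho_h\le1$, and let $(\eta^0_x)_{x\in\mathbb{Z}}$ be i.i.d. with $\mathbb{P}(\eta^0_x=1)=\rho_b$, $\mathbb{P}(\eta^0_x=-1)=\rho_h$, $\mathbb{P}(\eta^0_x=0)=1-\rho_b-\rho_h$. Then almost surely there are infinitely many separators on the right of $0$ and infinitely many on the left of $0$.
   Context: A vertex $v\in\mathbb{Z}$ is a separator for $\eta^0$ if $\eta^0_v=-1$, $\sum_{j=k}^{v-1}\eta^0_j\le0$ for all $k<v$, and $\sum_{j=v+1}^{k}\eta^0_j\le0$ for all $k>v$. (State $1$ = ball, $-1$ = hole, $0$ = neutral.) *)

(* Defs.v *)
From HB Require Import structures.
From mathcomp Require Import all_boot all_order all_algebra.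
From mathcomp Require Import all_classical all_reals all_analysis.
Set Implicit Arguments. Unset Strict Implicit. Unset Printing Implicit Defensive.
Import Order.TTheory GRing.Theory Num.Theory.
Local Open Scope ring_scope.
Local Open Scope classical_set_scope.

(* A configuration on Z: value 1 = ball, -1 = hole, 0 = neutral. *)

Definition left_sum (c : int -> int) (k v : int) : int :=
  \sum_(i < `|v - k|%N) c (k + (i : nat)%:Z).

Definition right_sum (c : int -> int) (v k : int) : int :=
  \sum_(i < `|k - v|%N) c (v + 1 + (i : nat)%:Z).

Definition separator (c : int -> int) (v : int) : Prop :=
  c v = -1 /\
  (forall k : int, k < v -> left_sum c k v <= 0) /\
  (forall k : int, v < k -> right_sum c v k <= 0).

Definition mutually_independent {d} {T : measurableType d} {R : realType}
  (P : probability T R) (X : int -> T -> int) : Prop :=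
  forall (s : seq int) (val : int -> int), uniq s ->
    P (\big[setI/setT]_(x <- s) [set w | X x w = val x]) =
    (\prod_(x <- s) P [set w | X x w = val x])%E.

(* Main.v *)
Require Import Defs.
From HB Require Import structures.
From mathcomp Require Import all_boot all_order all_algebra.
From mathcomp Require Import all_classical all_reals all_analysis.
From mathcomp Require Import measurable_realfun.
From mathcomp Require Import zify ring lra.
Import Order.TTheory GRing.Theory Num.Theory.
Set Implicit Arguments. Unset Strict Implicit. Unset Printing Implicit Defensive.
Local Open Scope ring_scope.
Local Open Scope classical_set_scope.
Section Mu.
Context (R : realType) (b h : R).
Let c := 1 - b - h.

Fixpoint mu (m : nat) (phi : seq int -> bool) : R :=
  match m with
  | 0%N => (phi [::])%:R
  | m'.+1 => b * mu m' (fun u => phi (1 :: u)) + h * mu m' (fun u => phi (-1 :: u))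
             + c * mu m' (fun u => phi (0 :: u))
  end.

Lemma mu_ext m phi psi : (forall u, phi u = psi u) -> mu m phi = mu m psi.
Proof. by move=> H; congr mu; apply: funext. Qed.

Lemma mu_false m : mu m (fun _ => false) = 0.
Proof. elim: m => [|m IH] //=; rewrite IH; ring. Qed.

Lemma mu_andl m (bb : bool) psi : mu m (fun u => bb && psi u) = bb%:R * mu m psi.
Proof.
case: bb => /=; first by rewrite mul1r.
by rewrite mul0r mu_false.
Qed.

Lemma mu_cat m1 m2 phi1 phi2 :
  mu (m1 + m2) (fun u => phi1 (take m1 u) && phi2 (drop m1 u)) = mu m1 phi1 * mu m2 phi2.
Proof.
elim: m1 phi1 => [|m1 IH] phi1 /=; last first.
  rewrite (IH (fun u => phi1 (1 :: u))) (IH (fun u => phi1 (-1 :: u))) (IH (fun u => phi1 (0 :: u))).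
  ring.
  by rewrite add0n (@mu_ext _ _ (fun u => phi1 [::] && phi2 u)) ?mu_andl // => u; rewrite take0 drop0.
Qed.

Context (b0 : 0 <= b) (h0 : 0 <= h) (c0 : 0 <= c).

Lemma mu_ge0 m phi : 0 <= mu m phi.
Proof.
elim: m phi => [|m IH] phi /=; first by case: (phi [::]).
by rewrite !addr_ge0 // mulr_ge0.
Qed.

Lemma mu_le1 m phi : mu m phi <= 1.
Proof.
elim: m phi => [|m IH] phi /=; first by case: (phi [::]).
have e : b + h + c = 1 by rewrite /c; ring.
rewrite -[leRHS]e !lerD // ?ler_piMr //; by rewrite -[X in _ <= X]mulr1 ler_wpM2l.
Qed.

Fixpoint stay (s : int) (u : seq int) : bool :=
  if u is a :: u' then (s + a <= 0) && stay (s + a) u' else true.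

Lemma mu_stay_mono m s : mu m.+1 (stay s) <= mu m (stay s).
Proof.
elim: m s => [|m IH] s.
  by rewrite [mu 0 _]/=; exact: mu_le1.
rewrite [mu m.+2 _]/= [mu m.+1 (stay s)]/=.
have key : forall bb s', mu m.+1 (fun u => bb && stay s' u) <= mu m (fun u => bb && stay s' u).
  by move=> bb s'; rewrite !mu_andl ler_wpM2l //; case: bb.
by apply: lerD; [apply: lerD|]; apply: ler_wpM2l => //; exact: key.
Qed.

End Mu.
Section Lb.
Context (R : realType) (b h : R) (b0 : 0 <= b) (hpos : 0 < h) (c0 : 0 <= 1 - b - h).
Let r := b / h.
Let br : b = h * r. Proof. by rewrite /r mulrC divfK // gt_eqF. Qed.
Let r0 : 0 <= r. Proof. by rewrite /r divr_ge0 // ltW. Qed.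

Lemma mu_stay_lb m n : 1 - r ^+ n.+1 <= mu b h m (stay (- n%:Z)).
Proof.
elim: m n => [|m IH] n.
  by rewrite /= lerBlDr lerDl exprn_ge0.
rewrite /= !mu_andl.
case: n => [|k].
  have e1 : (- (0%N)%:Z + 1 <= 0) = false by [].
  have e2 : (- (0%N)%:Z + -1 <= 0) = true by [].
  have e3 : (- (0%N)%:Z + 0 <= 0) = true by [].
  have f2 : - (0%N)%:Z + -1 = - (1%N)%:Z by [].
  have f3 : - (0%N)%:Z + 0 = - (0%N)%:Z by [].
  rewrite e1 e2 e3 f2 f3 /= mul0r mulr0 add0r !mul1r.
  apply: le_trans (_ : h * (1 - r ^+ 2) + (1 - b - h) * (1 - r ^+ 1) <= _).
    by rewrite le_eqVlt; apply/orP; left; apply/eqP; rewrite br; ring.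
  by apply: lerD; apply: ler_wpM2l; [exact: ltW|exact: IH|exact: c0|exact: IH].
have e1 : (- (k.+1)%:Z + 1 <= 0) = true by apply/idP; lia.
have e2 : (- (k.+1)%:Z + -1 <= 0) = true by apply/idP; lia.
have e3 : (- (k.+1)%:Z + 0 <= 0) = true by apply/idP; lia.
have f1 : - (k.+1)%:Z + 1 = - k%:Z by lia.
have f2 : - (k.+1)%:Z + -1 = - (k.+2)%:Z by lia.
have f3 : - (k.+1)%:Z + 0 = - (k.+1)%:Z by lia.
rewrite e1 e2 e3 f1 f2 f3 /= !mul1r.
apply: le_trans (_ : b * (1 - r ^+ k.+1) + h * (1 - r ^+ k.+3) + (1 - b - h) * (1 - r ^+ k.+2) <= _).
  by rewrite le_eqVlt; apply/orP; left; apply/eqP; rewrite br !exprS; ring.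
by apply: lerD; [apply: lerD|]; apply: ler_wpM2l; (exact: b0 || exact: ltW || exact: c0 || exact: IH).
Qed.

Lemma r_lt1 : b < h -> r < 1.
Proof. by move=> bh; rewrite /r ltr_pdivrMr // mul1r. Qed.
End Lb.
Fixpoint up (a : int) (m : nat) : seq int :=
  if m is m'.+1 then a :: up (a + 1) m' else [::].
Fixpoint down (a : int) (m : nat) : seq int :=
  if m is m'.+1 then a :: down (a - 1) m' else [::].

Lemma size_up a m : size (up a m) = m.
Proof. by elim: m a => [|m IH] a //=; rewrite IH. Qed.
Lemma size_down a m : size (down a m) = m.
Proof. by elim: m a => [|m IH] a //=; rewrite IH. Qed.

Lemma up_bounds a m : all (fun y => (a <= y) && (y < a + m%:Z)) (up a m).
Proof.
elim: m a => [|m IH] a //=; apply/andP; split; first by apply/andP; split; lia.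
by apply: sub_all (IH (a + 1)) => y /andP [H1 H2]; apply/andP; split; lia.
Qed.

Lemma down_bounds a m : all (fun y => (a - m%:Z < y) && (y <= a)) (down a m).
Proof.
elim: m a => [|m IH] a //=; apply/andP; split; first by apply/andP; split; lia.
by apply: sub_all (IH (a - 1)) => y /andP [H1 H2]; apply/andP; split; lia.
Qed.

Lemma uniq_up a m : uniq (up a m).
Proof.
elim: m a => [|m IH] a //=; rewrite IH andbT.
apply/negP => /(allP (up_bounds (a + 1) m)) /andP [H1 H2]; lia.
Qed.

Lemma uniq_down a m : uniq (down a m).
Proof.
elim: m a => [|m IH] a //=; rewrite IH andbT.
apply/negP => /(allP (down_bounds (a - 1) m)) /andP [H1 H2]; lia.
Qed.

Lemma uniq_catI (s1 s2 : seq int) (c : int) : uniq s1 -> uniq s2 ->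
  all (fun x => x < c) s1 -> all (fun y => c <= y) s2 -> uniq (s1 ++ s2).
Proof.
move=> u1 u2 a1 a2; rewrite cat_uniq u1 u2 andbT /=.
apply/hasPn => y ys2; apply/negP => ys1.
have := allP a1 y ys1; have := allP a2 y ys2; lia.
Qed.

Lemma sum_up (cf : int -> int) a j :
  \sum_(i < j.+1) cf (a + i%:Z) = cf a + \sum_(i < j) cf (a + 1 + i%:Z).
Proof.
rewrite big_ord_recl /= addr0; congr (_ + _); apply: eq_bigr => i _.
by congr cf; rewrite /bump /=; lia.
Qed.

Lemma sum_down (cf : int -> int) a j :
  \sum_(i < j.+1) cf (a - i%:Z) = cf a + \sum_(i < j) cf (a - 1 - i%:Z).
Proof.
rewrite big_ord_recl /= subr0; congr (_ + _); apply: eq_bigr => i _.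
by congr cf; rewrite /bump /=; lia.
Qed.

Lemma stay_up (cf : int -> int) m : forall s a, stay s (map cf (up a m)) <->
  (forall j : nat, (0 < j <= m)%N -> s + \sum_(i < j) cf (a + i%:Z) <= 0).
Proof.
elim: m => [|m IH] s a /=.
  by split => // _ j /andP [H1 H2]; lia.
split.
  move=> /andP [H1 /IH H2] [|j] //= Hj.
  rewrite sum_up addrA; case: j Hj => [|j] Hj; first by rewrite big_ord0 addr0.
  by apply: H2.
move=> H; apply/andP; split.
  by have := H 1%N isT; rewrite big_ord1 addr0.
apply/IH => j /andP [j0 jm].
have := H j.+1; rewrite sum_up addrA; apply; lia.
Qed.

Lemma stay_down (cf : int -> int) m : forall s a, stay s (map cf (down a m)) <->
  (forall j : nat, (0 < j <= m)%N -> s + \sum_(i < j) cf (a - i%:Z) <= 0).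
Proof.
elim: m => [|m IH] s a /=.
  by split => // _ j /andP [H1 H2]; lia.
split.
  move=> /andP [H1 /IH H2] [|j] //= Hj.
  rewrite sum_down addrA; case: j Hj => [|j] Hj; first by rewrite big_ord0 addr0.
  by apply: H2.
move=> H; apply/andP; split.
  by have := H 1%N isT; rewrite big_ord1 subr0.
apply/IH => j /andP [j0 jm].
have := H j.+1; rewrite sum_down addrA; apply; lia.
Qed.

Lemma sum_rev (cf : int -> int) v (j : nat) :
  \sum_(i < j) cf (v - j%:Z + i%:Z) = \sum_(i < j) cf (v - 1 - i%:Z).
Proof.
rewrite (reindex_inj rev_ord_inj) /=; apply: eq_bigr => i _.
congr cf; have := ltn_ord i; lia.
Qed.

Lemma abs_pos (v k : int) : k < v -> (absz ((v - k)%R))%:Z = v - k.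
Proof. by move=> H; rewrite gez0_abs // subr_ge0 ltW. Qed.

Lemma sep_iff (cf : int -> int) v : separator cf v <->
  [/\ cf v = -1,
      (forall j : nat, (0 < j)%N -> \sum_(i < j) cf (v - 1 - i%:Z) <= 0) &
      (forall j : nat, (0 < j)%N -> \sum_(i < j) cf (v + 1 + i%:Z) <= 0)].
Proof.
rewrite /separator /left_sum /right_sum; split.
  move=> [H1 [H2 H3]]; split => // j j0.
    have := H2 (v - j%:Z)%R; rewrite -sum_rev.
    have -> : absz ((v - (v - j%:Z))%R) = j by rewrite opprB addrC subrK.
    by apply; lia.
  have := H3 (v + j%:Z)%R.
  have -> : absz ((v + j%:Z - v)%R) = j by rewrite addrC addKr.
  by apply; lia.
move=> [H1 H2 H3]; split => //; split.
  move=> k kv; have e := abs_pos kv.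
  have := H2 (absz ((v - k)%R)); rewrite -sum_rev e.
  have -> : v - (v - k) = k by rewrite opprB addrC subrK.
  by apply; lia.
move=> k kv; have e := abs_pos kv.
by apply: H3; lia.
Qed.
Section Prob.
Context d (T : measurableType d) (R : realType) (P : probability T R)
  (eta0 : int -> T -> int) (b h : R).
Context (Hm : forall x v, measurable [set w | eta0 x w = v])
  (Hind : mutually_independent P eta0)
  (Hb : forall x, P [set w | eta0 x w = 1] = b%:E)
  (Hh : forall x, P [set w | eta0 x w = -1] = h%:E)
  (Hc : forall x, P [set w | eta0 x w = 0] = (1 - b - h)%:E)
  (bh : b < h).

#[local] Hint Resolve Hm : core.

Definition E (s : seq int) (phi : seq int -> bool) : set T :=
  [set w | phi (map (eta0 ^~ w) s)].
Definition cyl (t : seq int) (val : int -> int) : set T :=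
  \big[setI/setT]_(x <- t) [set w | eta0 x w = val x].

Lemma mE s phi : measurable (E s phi).
Proof.
elim: s phi => [|x s IH] phi.
  rewrite /E /=; case: (phi [::]).
    by rewrite (_ : [set _ | true] = setT) //; apply/seteqP; split.
  by rewrite (_ : [set _ | false] = set0) //; apply/seteqP; split.
rewrite (_ : E (x :: s) phi = \bigcup_(a : int) ([set w | eta0 x w = a] `&` E s (fun u => phi (a :: u)))).
  apply: countable_bigcupT_measurable; first exact: countableP.
  by move=> a; apply: measurableI.
apply/seteqP; split => w /=.
  by move=> Hw; exists (eta0 x w) => //.
by move=> [a _ [Ha Hw]]; rewrite /E /= Ha.
Qed.

Lemma mcyl t val : measurable (cyl t val).
Proof.
elim: t => [|x t IH]; rewrite /cyl ?big_nil ?big_cons //.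
exact: measurableI.
Qed.

Lemma PU A B : measurable A -> measurable B -> A `&` B = set0 -> P (A `|` B) = (P A + P B)%E.
Proof. by move=> mA mB AB; rewrite measureU. Qed.

Lemma PDI A B : measurable A -> measurable B -> P A = (P (A `\` B) + P (A `&` B))%E.
Proof. by move=> mA mB; exact: measureDI. Qed.

Lemma Pge0 A : (0 <= P A)%E.
Proof. exact: measure_ge0. Qed.

Lemma Ple A B : measurable A -> measurable B -> A `<=` B -> (P A <= P B)%E.
Proof. by move=> mA mB AB; apply: le_measure; rewrite ?inE. Qed.

Lemma PC A : measurable A -> P (~` A) = (1 - P A)%E.
Proof. exact: probability_setC. Qed.

Lemma PT : P setT = 1%E.
Proof. exact: probability_setT. Qed.

Lemma Pfin A : measurable A -> P A = (fine (P A))%:E.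
Proof. by move=> mA; rewrite fineK // fin_num_measure. Qed.

Lemma cyl_eq t v1 v2 : {in t, v1 =1 v2} -> cyl t v1 = cyl t v2.
Proof. by move=> H; apply: eq_big_seq => x xt; rewrite H. Qed.

Lemma disj x a1 a2 (A B : set T) : a1 != a2 ->
  (A `&` [set w | eta0 x w = a1]) `&` (B `&` [set w | eta0 x w = a2]) = set0.
Proof.
move=> /eqP ne; apply/seteqP; split => w //= [[_ H1] [_ H2]].
by apply: ne; rewrite -H1 -H2.
Qed.

Lemma split3 x A : measurable A ->
  P A = P (A `&` [set w | eta0 x w = 1]) + P (A `&` [set w | eta0 x w = -1])
        + P (A `&` [set w | eta0 x w = 0]).
Proof.
move=> mA.
set U := [set w | eta0 x w = 1] `|` [set w | eta0 x w = -1] `|` [set w | eta0 x w = 0].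
have mU : measurable U by rewrite /U; apply: measurableU => //; apply: measurableU.
have d12 : [set w | eta0 x w = 1] `&` [set w | eta0 x w = -1] = set0.
  by apply/seteqP; split => w //= [H1 H2]; move: H1; rewrite H2 => /eqP.
have d123 : ([set w | eta0 x w = 1] `|` [set w | eta0 x w = -1]) `&` [set w | eta0 x w = 0] = set0.
  by apply/seteqP; split => w //= [[H1|H1] H2]; move: H1; rewrite H2 => /eqP.
have PU0 : P U = 1%E.
  rewrite /U PU //; last by apply: measurableU.
  rewrite PU // (Hb x) (Hh x) (Hc x) -!EFinD; congr (_%:E); ring.
have PAU : P (A `\` U) = 0%E.
  apply/eqP; rewrite eq_le Pge0 andbT.
  apply: (@le_trans _ _ (P (~` U))).
    apply: Ple; first (by apply: measurableD); first (by apply: measurableC); by move=> w [].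
  by rewrite PC // PU0 subee.
have m1 := measurableI _ _ mA (Hm x 1).
have m2 := measurableI _ _ mA (Hm x (-1)).
have m3 := measurableI _ _ mA (Hm x 0).
rewrite (PDI mA mU) PAU add0e /U !setIUr.
rewrite PU; [| exact: measurableU m1 m2 | exact: m3 | by rewrite setIUl !disj // setU0].
by rewrite PU; [| exact m1| exact m2| by rewrite disj].
Qed.

Lemma P0 : P set0 = 0%E.
Proof. exact: measure0. Qed.

Lemma cyl_cons x t v : cyl (x :: t) v = [set w | eta0 x w = v x] `&` cyl t v.
Proof. by rewrite /cyl big_cons. Qed.

Lemma Pcyl t val : uniq t ->
  P (cyl t val) = (\prod_(x <- t) P [set w | eta0 x w = val x])%E.
Proof. by move=> ut; apply: Hind. Qed.

Lemma Pcons x t v : uniq (x :: t) ->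
  P (cyl (x :: t) v) = (P [set w | eta0 x w = v x] * P (cyl t v))%E.
Proof.
move=> uxt; rewrite Pcyl // big_cons Pcyl //.
by case/andP: uxt.
Qed.

Lemma core s : forall t val phi, uniq (s ++ t) ->
  P (cyl t val `&` E s phi) = (P (cyl t val) * (mu b h (size s) phi)%:E)%E.
Proof.
elim: s => [|x s IH] t val phi.
  move=> _; rewrite /E /=; case: (phi [::]) => /=.
    rewrite (_ : [set _ | true] = setT); last by apply/seteqP; split.
    by rewrite setIT mule1.
  rewrite (_ : [set _ | false] = set0); last by apply/seteqP; split.
  by rewrite setI0 P0 mule0.
rewrite /= => /andP [xst ust].
have xt : x \notin t by move: xst; rewrite mem_cat negb_or => /andP[].
have ut : uniq t by move: ust; rewrite cat_uniq => /and3P[].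
have uxt : uniq (x :: t) by rewrite /= xt ut.
have u2 : uniq (s ++ x :: t) by rewrite -cat1s uniq_catCA cat1s /= xst ust.
set A := cyl t val `&` E (x :: s) phi.
have mA : measurable A by apply: measurableI; [apply: mcyl | apply: mE].
rewrite (split3 x mA).
have key : forall a, A `&` [set w | eta0 x w = a] =
   cyl (x :: t) (fun y => if y == x then a else val y) `&` E s (fun u => phi (a :: u)).
  move=> a.
  have ct : cyl t (fun y => if y == x then a else val y) = cyl t val.
    apply: cyl_eq => y yt; case: eqP => // yx.
    by move: xt; rewrite -yx yt.
  rewrite cyl_cons ct eqxx.
  apply/seteqP; split => w /=.
    by move=> [[Hc' He] Hx]; split; [split|]; rewrite // /E /= -Hx.
  by move=> [[Hx Hc'] He]; split; [split|]; rewrite // /E /= Hx.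
rewrite !key !IH // !Pcons // !eqxx.
have ct : forall a, cyl t (fun y => if y == x then a else val y) = cyl t val.
  move=> a; apply: cyl_eq => y yt; case: eqP => // yx.
  by move: xt; rewrite -yx yt.
rewrite !ct (Hb x) (Hh x) (Hc x) (Pfin (mcyl t val)) -!EFinM -!EFinD.
by congr (_%:E); rewrite /=; ring.
Qed.

Lemma PE s phi : uniq s -> P (E s phi) = (mu b h (size s) phi)%:E.
Proof.
move=> us; have := @core s [::] id phi; rewrite cats0 => /(_ us).
by rewrite /cyl big_nil setTI PT mul1e.
Qed.

Definition isneg (u : seq int) : bool := u == [:: -1].
Definition EB (bs : seq (seq int * (seq int -> bool))) : set T :=
  \big[setI/setT]_(p <- bs) E p.1 p.2.

Lemma E_cat s1 s2 phi1 phi2 : E s1 phi1 `&` E s2 phi2 =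
  E (s1 ++ s2) (fun u => phi1 (take (size s1) u) && phi2 (drop (size s1) u)).
Proof.
apply/seteqP; split => w; rewrite /E /= map_cat take_size_cat ?size_map //
  drop_size_cat ?size_map //.
  by move=> [-> ->].
by move=> /andP.
Qed.

Lemma PE_cat s1 s2 phi1 phi2 : uniq (s1 ++ s2) ->
  P (E s1 phi1 `&` E s2 phi2) = (P (E s1 phi1) * P (E s2 phi2))%E.
Proof.
move=> u; have := u; rewrite cat_uniq => /and3P [u1 _ u2].
by rewrite E_cat PE // size_cat mu_cat !PE // EFinM.
Qed.

Lemma EB_E bs : exists phi, EB bs = E (flatten (map fst bs)) phi.
Proof.
elim: bs => [|p bs [phi IH]].
  exists (fun _ => true); rewrite /EB big_nil; apply/seteqP; split => w //.
by exists (fun u => p.2 (take (size p.1) u) && phi (drop (size p.1) u));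
  rewrite /EB big_cons -/(EB bs) IH E_cat.
Qed.

Lemma mEB bs : measurable (EB bs).
Proof. by have [phi ->] := EB_E bs; apply: mE. Qed.

Lemma PEB bs : uniq (flatten (map fst bs)) ->
  P (EB bs) = (\prod_(p <- bs) P (E p.1 p.2))%E.
Proof.
elim: bs => [|p bs IH] /=.
  by move=> _; rewrite /EB !big_nil PT.
move=> u; have := u; rewrite cat_uniq => /and3P [_ _ u2].
rewrite /EB big_cons -/(EB bs); have [phi E1] := EB_E bs.
by rewrite big_cons -IH // E1 PE_cat // -E1.
Qed.

Lemma mu1neg : mu b h 1 isneg = h.
Proof. by rewrite /= /isneg /=; ring. Qed.

Lemma PEneg v : P (E [:: v] isneg) = h%:E.
Proof. by rewrite PE // mu1neg. Qed.

Lemma Eneg v w : E [:: v] isneg w <-> eta0 v w = -1.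
Proof. by rewrite /E /isneg /=; split => [/eqP [->] | ->]. Qed.

Lemma Estay_down a m w : E (down a m) (stay 0) w <->
  (forall j : nat, (0 < j <= m)%N -> \sum_(i < j) eta0 (a - i%:Z) w <= 0).
Proof.
rewrite /E /=; rewrite stay_down.
by split => H j Hj; have := H j Hj; rewrite add0r.
Qed.

Lemma Estay_up a m w : E (up a m) (stay 0) w <->
  (forall j : nat, (0 < j <= m)%N -> \sum_(i < j) eta0 (a + i%:Z) w <= 0).
Proof.
rewrite /E /=; rewrite stay_up.
by split => H j Hj; have := H j Hj; rewrite add0r.
Qed.

Definition G v : set T := [set w | separator (eta0 ^~ w) v].

Definition Cm m v : set T :=
  EB [:: (down (v - 1) m, stay 0); ([:: v], isneg); (up (v + 1) m, stay 0)].

Lemma Cm_iff m v w : Cm m v w <-> [/\ eta0 v w = -1,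
   (forall j : nat, (0 < j <= m)%N -> \sum_(i < j) eta0 (v - 1 - i%:Z) w <= 0) &
   (forall j : nat, (0 < j <= m)%N -> \sum_(i < j) eta0 (v + 1 + i%:Z) w <= 0)].
Proof.
rewrite /Cm /EB !big_cons big_nil /=.
split.
  by move=> [/Estay_down H1 [/Eneg H2 [/Estay_up H3 _]]].
by move=> [H2 H1 H3]; split; [apply/Estay_down|split; [apply/Eneg|split; [apply/Estay_up|]]].
Qed.

Lemma G_Cm v : G v = \bigcap_m Cm m v.
Proof.
apply/seteqP; split => w /=.
  move=> /sep_iff [H1 H2 H3] m _; apply/Cm_iff; split => // j /andP [j0 _].
    exact: H2.
  exact: H3.
move=> H; apply/sep_iff; split.
- by have /Cm_iff [] := H 0%N I.
- by move=> j j0; have /Cm_iff [_ H2 _] := H j I; apply: H2; rewrite j0 leqnn.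
- by move=> j j0; have /Cm_iff [_ _ H3] := H j I; apply: H3; rewrite j0 leqnn.
Qed.

Lemma mCm m v : measurable (Cm m v).
Proof. exact: mEB. Qed.

Lemma mG v : measurable (G v).
Proof. by rewrite G_Cm; apply: bigcapT_measurable => m; apply: mCm. Qed.

Lemma Cm_mono v : nonincreasing_seq (fun m => Cm m v).
Proof.
move=> m n mn; apply/subsetPset => w /Cm_iff [H1 H2 H3]; apply/Cm_iff; split => // j /andP [j0 jm].
  by apply: H2; rewrite j0 (leq_trans jm mn).
by apply: H3; rewrite j0 (leq_trans jm mn).
Qed.

Lemma all_up_ge (c a : int) m : c <= a -> all (fun y => c <= y) (up a m).
Proof. by move=> ca; apply: sub_all (up_bounds a m) => y /andP [H1 _]; lia. Qed.
Lemma all_up_lt (c a : int) m : a + m%:Z <= c -> all (fun y => y < c) (up a m).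
Proof. by move=> ca; apply: sub_all (up_bounds a m) => y /andP [_ H2]; lia. Qed.
Lemma all_down_ge (c a : int) m : c <= a - m%:Z + 1 -> all (fun y => c <= y) (down a m).
Proof. by move=> ca; apply: sub_all (down_bounds a m) => y /andP [H1 _]; lia. Qed.
Lemma all_down_lt (c a : int) m : a < c -> all (fun y => y < c) (down a m).
Proof. by move=> ca; apply: sub_all (down_bounds a m) => y /andP [_ H2]; lia. Qed.

Lemma all_up_gt (c a : int) m : c < a -> all (fun y => c < y) (up a m).
Proof. by move=> ca; apply: sub_all (up_bounds a m) => y /andP [H1 _]; lia. Qed.
Lemma all_down_gt (c a : int) m : c < a - m%:Z + 1 -> all (fun y => c < y) (down a m).
Proof. by move=> ca; apply: sub_all (down_bounds a m) => y /andP [H1 _]; lia. Qed.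

Lemma mu1neg' (x : int) : mu b h (size ([:: x], isneg).1) ([:: x], isneg).2 = h.
Proof. exact: mu1neg. Qed.

Lemma uniq_consI (x : int) s : all (fun y => x < y) s -> uniq s -> uniq (x :: s).
Proof. by move=> a u; rewrite /= u andbT; apply/negP => /(allP a); rewrite ltxx. Qed.

Ltac bnd := rewrite /= ?all_cat /=; repeat (apply/andP; split); try done;
  first [ apply: all_up_ge | apply: all_up_gt | apply: all_down_gt | apply: all_up_lt | apply: all_down_ge | apply: all_down_lt | idtac ];
  lia.

Lemma PCm m v : P (Cm m v) = (mu b h m (stay 0) * h * mu b h m (stay 0))%:E.
Proof.
rewrite /Cm PEB; last first.
  rewrite /= cats0; apply: (@uniq_catI _ _ v); rewrite ?uniq_down //; try bnd.
  by apply: uniq_consI; rewrite ?uniq_up //; bnd.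
rewrite !big_cons big_nil !PE ?uniq_up ?uniq_down // !size_up !size_down !mu1neg' /=.
by rewrite mule1 -!EFinM mulrA.
Qed.

Definition Pair D v v' : set T :=
  EB [:: (down (v - 1) D, stay 0); ([:: v], isneg); (up (v + 1) D, stay 0);
         (down (v' - 1) D, stay 0); ([:: v'], isneg); (up (v' + 1) D, stay 0)].

Lemma mPair D v v' : measurable (Pair D v v').
Proof. exact: mEB. Qed.

Lemma Pair_sub D v v' : G v `&` G v' `<=` Pair D v v'.
Proof.
move=> w [/sep_iff [H1 H2 H3] /sep_iff [H1' H2' H3']].
rewrite /Pair /EB !big_cons big_nil /=.
split; first by apply/Estay_down => j /andP [j0 _]; exact: H2.
split; first by apply/Eneg.
split; first by apply/Estay_up => j /andP [j0 _]; exact: H3.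
split; first by apply/Estay_down => j /andP [j0 _]; exact: H2'.
split; first by apply/Eneg.
split; first by apply/Estay_up => j /andP [j0 _]; exact: H3'.
done.
Qed.

Lemma PPair D v v' : v + 2 * D%:Z + 1 <= v' ->
  P (Pair D v v') = (mu b h D (stay 0) * h * mu b h D (stay 0) *
                     (mu b h D (stay 0) * h * mu b h D (stay 0)))%:E.
Proof.
move=> vv.
rewrite /Pair PEB; last first.
  rewrite /= cats0.
  apply: (@uniq_catI _ _ v); rewrite ?uniq_down //; try bnd.
  apply: uniq_consI; try bnd.
  apply: (@uniq_catI _ _ (v + D%:Z + 1)); rewrite ?uniq_up //; try bnd.
  apply: (@uniq_catI _ _ v'); rewrite ?uniq_down //; try bnd.
  by apply: uniq_consI; rewrite ?uniq_up //; bnd.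
rewrite !big_cons big_nil !PE ?uniq_up ?uniq_down // !size_up !size_down !mu1neg' /=.
by rewrite mule1 -!EFinM !mulrA.
Qed.

Lemma b0 : 0 <= b.
Proof. by have := Pge0 [set w | eta0 0 w = 1]; rewrite (Hb 0) lee_fin. Qed.
Lemma c0 : 0 <= 1 - b - h.
Proof. by have := Pge0 [set w | eta0 0 w = 0]; rewrite (Hc 0) lee_fin. Qed.
Lemma hpos : 0 < h.
Proof. exact: le_lt_trans b0 bh. Qed.
Lemma h0 : 0 <= h.
Proof. exact: ltW hpos. Qed.
Lemma h1 : h <= 1.
Proof. have := b0; have := c0; lra. Qed.

Definition mus m := mu b h m (stay 0).
Definition rho := inf [set mus m | m in setT].

Lemma mus_ge0 m : 0 <= mus m.
Proof. exact: (mu_ge0 b0 h0 c0). Qed.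
Lemma mus_le1 m : mus m <= 1.
Proof. exact: (mu_le1 b0 h0 c0). Qed.

Lemma mus_mono m n : (m <= n)%N -> mus n <= mus m.
Proof.
elim: n => [|n IH]; first by rewrite leqn0 => /eqP ->.
rewrite leq_eqVlt => /orP [/eqP -> //| mn].
exact: le_trans (mu_stay_mono b0 h0 c0 n 0) (IH mn).
Qed.

Lemma rho_le m : rho <= mus m.
Proof.
have H : has_lbound [set mus m | m in setT].
  by exists 0 => _ [k _ <-]; apply: mus_ge0.
by apply: (ge_inf H); exists m.
Qed.

Lemma rho_lb : 1 - b / h <= rho.
Proof.
apply: lb_le_inf; first by exists (mus 0), 0%N.
move=> _ [m _ <-].
have := mu_stay_lb b0 hpos c0 m 0; rewrite expr1 /mus.
by rewrite (_ : - (0%N)%:Z = 0).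
Qed.

Lemma rho_pos : 0 < rho.
Proof. by apply: lt_le_trans rho_lb; rewrite subr_gt0 r_lt1 // hpos. Qed.

Lemma rho_le1 : rho <= 1.
Proof. exact: le_trans (rho_le 0) (mus_le1 0). Qed.

Lemma rho_approx x : rho < x -> exists m, mus m < x.
Proof.
move=> H; have [y [m _ <-] my] := inf_lt (ex_intro _ (mus 0) (ex_intro2 _ _ 0%N I erefl)) H.
by exists m.
Qed.

Lemma PG_lb v : ((h * rho ^+ 2)%:E <= P (G v))%E.
Proof.
have H := @nonincreasing_cvg_mu _ _ _ P (fun m => Cm m v).
have H' : (P \o (fun m => Cm m v)) @ \oo --> P (\bigcap_m Cm m v).
  apply: H.
  - exact: (le_lt_trans (probability_le1 P (mCm 0 v)) (ltry _)).
  - by move=> m; apply: mCm.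
  - by apply: bigcapT_measurable => m; apply: mCm.
  - exact: Cm_mono.
rewrite G_Cm -(cvg_lim _ H') //.
apply: lime_ge; first by apply/cvgP; exact: H'.
apply: nearW => m /=.
suff: ((h * rho ^+ 2)%:E <= P (Cm m v))%E by [].
rewrite PCm lee_fin.
have r0 := ltW rho_pos; have rm := rho_le m; have := h0.
rewrite /mus in rm.
move: (mu b h m (stay 0)) rm => y rm hh.
rewrite (_ : y * h * y = h * (y * y)); last by ring.
by rewrite expr2; apply: ler_wpM2l => //; apply: ler_pM.
Qed.

Lemma Ppair_ub D v v' : v + 2 * D%:Z + 1 <= v' ->
  (P (G v `&` G v') <= (h ^+ 2 * mus D ^+ 4)%:E)%E.
Proof.
move=> vv; apply: le_trans (_ : P (Pair D v v') <= _)%E.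
  by apply: Ple; [apply: measurableI; apply: mG | apply: mPair | apply: Pair_sub].
rewrite PPair // lee_fin /mus; rewrite le_eqVlt; apply/orP; left; apply/eqP; ring.
Qed.

Definition Zwin (a : int) (K : nat) : set T :=
  ~` \bigcup_(i in [set i | (i < K)%N]) G (a + i%:Z).

Lemma mZwin a K : measurable (Zwin a K).
Proof. by apply: measurableC; apply: bigcup_measurable => i _; apply: mG. Qed.

Lemma mind (A : set T) : measurable A ->
  measurable_fun setT ((fun w => (\1_A w : R)%:E) : T -> \bar R).
Proof.
move=> mA; apply: (measurable_EFinP _ _).2.
exact: measurable_realfun.measurable_indic.
Qed.

Lemma ind0 (A : set T) w : (0 <= (\1_A w : R)%:E)%E.
Proof. by rewrite lee_fin indicE; case: (w \in A). Qed.

Lemma pw (K : nat) (F : 'I_K -> set T) (Z : set T) (al : R) w :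
  (w \in Z -> forall i, w \notin F i) ->
  al ^+ 2 * \1_Z w + \sum_(i < K) 2 * al * \1_(F i) w <=
  \sum_(i < K) \sum_(j < K) \1_(F i `&` F j) w + al ^+ 2.
Proof.
move=> HZ.
set N := \sum_(i < K) (\1_(F i) w : R).
have -> : \sum_(i < K) \sum_(j < K) (\1_(F i `&` F j) w : R) = N * N.
  rewrite /N mulr_suml; apply: eq_bigr => i _; rewrite mulr_sumr.
  by apply: eq_bigr => j _; rewrite indicI.
have -> : \sum_(i < K) 2 * al * (\1_(F i) w : R) = 2 * al * N.
  by rewrite /N mulr_sumr.
have [wZ|wZ] := boolP (w \in Z).
  have -> : N = 0.
    rewrite /N big1 // => i _; rewrite indicE (negbTE (HZ wZ i)).
    by [].
  by rewrite indicE wZ /= mulr1 !mulr0 addr0 add0r.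
rewrite indicE (negbTE wZ) mulr0 add0r.
by have := sqr_ge0 (N - al); rewrite sqrrB !expr2; nra.
Qed.

Lemma second_moment a K :
  (\sum_(i < K) fine (P (G (a + i%:Z)))) ^+ 2 * fine (P (Zwin a K)) <=
  \sum_(i < K) \sum_(j < K) fine (P (G (a + i%:Z) `&` G (a + j%:Z)))
  - (\sum_(i < K) fine (P (G (a + i%:Z)))) ^+ 2.
Proof.
set Gi := fun i : nat => G (a + i%:Z).
have mGi i : measurable (Gi i) by apply: mG.
set Z := Zwin a K.
have mZ : measurable Z by apply: mZwin.
set al := \sum_(i < K) fine (P (Gi i)).
have al0 : 0 <= al by apply: sumr_ge0 => i _; apply: fine_ge0; apply: Pge0.
set f1 := fun w => ((al ^+ 2)%:E * (\1_Z w)%:E +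
   \sum_(i < K) ((2 * al)%:E * (\1_(Gi i) w)%:E))%E.
set f2 := fun w => (\sum_(i < K) \sum_(j < K) (\1_(Gi i `&` Gi j) w : R)%:E
   + (al ^+ 2)%:E)%E.
have mf1a : measurable_fun setT (fun w => ((al ^+ 2)%:E * (\1_Z w)%:E)%E).
  by apply: measurable_funeM; apply: mind.
have mf1b : measurable_fun setT (fun w => \sum_(i < K) ((2 * al)%:E * (\1_(Gi i) w)%:E))%E.
  by apply: emeasurable_sum => i; apply: measurable_funeM; apply: mind.
have mf2a : measurable_fun setT (fun w => \sum_(i < K) \sum_(j < K) (\1_(Gi i `&` Gi j) w : R)%:E)%E.
  apply: emeasurable_sum => i /=; apply: emeasurable_sum => j /=; apply: mind.
  exact: measurableI.
have f1a0 w : (0 <= (al ^+ 2)%:E * (\1_Z w)%:E)%E.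
  by apply: mule_ge0; [rewrite lee_fin exprn_ge0|apply: ind0].
have f1b0 w : (0 <= \sum_(i < K) ((2 * al)%:E * (\1_(Gi i) w)%:E))%E.
  apply: sume_ge0 => i _; apply: mule_ge0; [rewrite lee_fin mulr_ge0|apply: ind0] => //.
have f2a0 w : (0 <= \sum_(i < K) \sum_(j < K) (\1_(Gi i `&` Gi j) w : R)%:E)%E.
  by apply: sume_ge0 => i _; apply: sume_ge0 => j _; apply: ind0.
have key : (\int[P]_(w in setT) f1 w <= \int[P]_(w in setT) f2 w)%E.
  apply: ge0_le_integral => //.
  - by move=> w _; rewrite /f1 adde_ge0.
  - exact: emeasurable_funD.
  - by apply: emeasurable_funD => //; apply: measurable_cst.
  move=> w _; rewrite /f1 /f2.
  have E1 : (\sum_(i < K) ((2 * al)%:E * (\1_(Gi i) w)%:E))%E =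
             (\sum_(i < K) 2 * al * \1_(Gi i) w)%:E.
    by rewrite -sumEFin; apply: eq_bigr => i _; rewrite EFinM.
  have E2 : (\sum_(i < K) \sum_(j < K) (\1_(Gi i `&` Gi j) w : R)%:E)%E =
             (\sum_(i < K) \sum_(j < K) \1_(Gi i `&` Gi j) w)%:E.
    by rewrite -sumEFin; apply: eq_bigr => i _; rewrite -sumEFin.
  rewrite E1 E2 -EFinM -!EFinD lee_fin.
  apply: pw => wZ i; apply/negP => /set_mem wG; move: wZ => /set_mem; apply.
  by exists i => //=; apply: ltn_ord.
have I1 : (\int[P]_(w in setT) f1 w =
   ((al ^+ 2) * fine (P Z) + \sum_(i < K) (2 * al) * fine (P (Gi i)))%:E)%E.
  rewrite /f1 (ge0_integralD _ measurableT (fun w _ => f1a0 w) mf1a (fun w _ => f1b0 w) mf1b).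
  rewrite (ge0_integralZl_EFin _ measurableT (fun w _ => ind0 Z w) (mind mZ)); last first.
    exact: exprn_ge0.
  rewrite (integral_indic _ measurableT mZ) setIT.
  rewrite (ge0_integral_sum _ measurableT (f := fun (i : 'I_K) w => ((2 * al)%:E * (\1_(Gi i) w : R)%:E)%E)); last 2 first.
  - by move=> i; apply: measurable_funeM; apply: mind.
  - by move=> i w _; apply: mule_ge0; [rewrite lee_fin mulr_ge0|apply: ind0].
  have H2 : forall i : 'I_K, (\int[P]_(w in setT) ((2 * al)%:E * (\1_(Gi i) w : R)%:E) =
             ((2 * al) * fine (P (Gi i)))%:E)%E.
    move=> i; rewrite (ge0_integralZl_EFin _ measurableT (fun w _ => ind0 (Gi i) w) (mind (mGi i))); last first.
      by rewrite mulr_ge0.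
    rewrite (integral_indic _ measurableT (mGi i)) setIT [in RHS]EFinM fineK //.
    exact: fin_num_measure.
  rewrite (eq_bigr _ (fun i _ => H2 i)) sumEFin EFinD [in RHS]EFinM fineK //.
  exact: fin_num_measure.
have I2 : (\int[P]_(w in setT) f2 w =
   (\sum_(i < K) \sum_(j < K) fine (P (Gi i `&` Gi j)) + al ^+ 2)%:E)%E.
  rewrite /f2 (ge0_integralD _ measurableT (fun w _ => f2a0 w) mf2a); last 2 first.
  - by move=> w _; rewrite lee_fin exprn_ge0.
  - exact: measurable_cst.
  have PT' : (P : measure T R) [set: T] = 1%E by exact: PT.
  rewrite integral_cst // PT' mule1.
  rewrite (ge0_integral_sum _ measurableT (f := fun (i : 'I_K) w => (\sum_(j < K) (\1_(Gi i `&` Gi j) w : R)%:E)%E)); last 2 first.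
  - move=> i; apply: emeasurable_sum => j /=; apply: mind.
    exact: measurableI.
  - by move=> i w _; apply: sume_ge0 => j _; apply: ind0.
  have H2 : forall i : 'I_K, (\int[P]_(w in setT) (\sum_(j < K) (\1_(Gi i `&` Gi j) w : R)%:E) =
             (\sum_(j < K) fine (P (Gi i `&` Gi j)))%:E)%E.
    move=> i; rewrite (ge0_integral_sum _ measurableT (f := fun (j : 'I_K) w => (\1_(Gi i `&` Gi j) w : R)%:E)); last 2 first.
    - by move=> j; apply: mind; apply: measurableI.
    - by move=> j w _; apply: ind0.
    rewrite -sumEFin; apply: eq_bigr => j _.
    rewrite (integral_indic _ measurableT (measurableI _ _ (mGi i) (mGi j))) setIT fineK //.
    by apply: fin_num_measure; apply: measurableI.
  by rewrite (eq_bigr _ (fun i _ => H2 i)) sumEFin EFinD.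
move: key; rewrite I1 I2 lee_fin -mulr_sumr.
have -> : 2 * al * \sum_(i < K) fine (P (Gi i)) = 2 * al ^+ 2.
  by rewrite /al expr2 mulrA.
move=> H; have aux : forall X S Y : R, X + 2 * Y <= S + Y -> X <= S - Y by move=> X S Y; lra.
exact: (aux _ _ _ H).
Qed.

Lemma count_win (l u K : nat) :
  (\sum_(j < K) ((l <= j) && (j < u) : nat) <= u - l)%N.
Proof.
suff : (\sum_(j < K) ((l <= j) && (j < u) : nat) <= minn K u - l)%N.
  by move=> H; apply: leq_trans H _; lia.
elim: K => [|K IH]; first by rewrite big_ord0.
rewrite big_ord_recr /=.
case: (boolP ((l <= K) && (K < u))%N) => /= [/andP [H1 H2]|H]; move: IH; set s := \sum_(j < K) _; lia.
Qed.

Lemma near_count (K D i : nat) :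
  \sum_(j < K) ((((i - 2 * D <= j) && (j < i + 2 * D + 1))%N : nat)%:R : R) <= (4 * D + 1)%:R.
Proof.
rewrite -natr_sum ler_nat.
apply: leq_trans (count_win (i - 2 * D) (i + 2 * D + 1) K) _.
lia.
Qed.

Lemma fineP_le A (x : R) : measurable A -> (P A <= x%:E)%E -> fine (P A) <= x.
Proof. by move=> mA; rewrite (Pfin mA) lee_fin. Qed.

Lemma fineP_ge A (x : R) : measurable A -> (x%:E <= P A)%E -> x <= fine (P A).
Proof. by move=> mA; rewrite (Pfin mA) lee_fin. Qed.

Lemma fineP_le1 A : measurable A -> fine (P A) <= 1.
Proof. by move=> mA; apply: fineP_le => //; apply: probability_le1. Qed.

Lemma gg_bound (a : int) (D i j : nat) :
  fine (P (G (a + i%:Z) `&` G (a + j%:Z))) <=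
  (((i - 2 * D <= j) && (j < i + 2 * D + 1))%N : nat)%:R + h ^+ 2 * mus D ^+ 4.
Proof.
have c40 : 0 <= h ^+ 2 * mus D ^+ 4.
  by apply: mulr_ge0; apply: exprn_ge0; [exact: h0 | exact: mus_ge0].
have mGG : measurable (G (a + i%:Z) `&` G (a + j%:Z)) by apply: measurableI; apply: mG.
case: (boolP ((i - 2 * D <= j) && (j < i + 2 * D + 1))%N) => [_|H] /=.
  by apply: le_trans (fineP_le1 mGG) _; rewrite lerDl.
rewrite add0r; apply: fineP_le => //.
have [ij|ji] : (i + 2 * D + 1 <= j)%N \/ (j + 2 * D + 1 <= i)%N by lia.
  by apply: Ppair_ub; lia.
by rewrite setIC; apply: Ppair_ub; lia.
Qed.

Lemma p0_pos : 0 < h * rho ^+ 2.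
Proof. by rewrite mulr_gt0 ?hpos // exprn_gt0 // rho_pos. Qed.

Lemma window_small eps : 0 < eps -> exists K, forall a, fine (P (Zwin a K)) <= eps.
Proof.
move=> eps0.
set p0 := h * rho ^+ 2.
have p00 : 0 < p0 := p0_pos.
have p01 : p0 <= 1.
  rewrite /p0; have := h1; have := rho_le1; have := ltW rho_pos; have := h0.
  move=> ? ? ? ?; rewrite expr2; nra.
set del := eps * p0 ^+ 2 / 8.
have del0 : 0 < del by rewrite /del divr_gt0 // mulr_gt0 // exprn_gt0.
have [D HD] : exists D, mus D < rho + del by apply: rho_approx; rewrite ltrDl.
set y := mus D in HD.
have ry : rho <= y := rho_le D.
have y1 : y <= 1 := mus_le1 D.
have r0 : 0 < rho := rho_pos.
have c4b : h ^+ 2 * y ^+ 4 <= p0 ^+ 2 + eps * p0 ^+ 2 / 2.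
  have hh0 := h0; have hh1 := h1.
  set y' := h * y ^+ 2.
  have e1 : h ^+ 2 * y ^+ 4 = y' ^+ 2 by rewrite /y'; ring.
  have y'p : p0 <= y' by rewrite /y' /p0; apply: ler_wpM2l => //; rewrite !expr2; apply: ler_pM => //; exact: ltW.
  have y'1 : y' <= 1 by rewrite /y' !expr2; nra.
  have d1 : y' - p0 <= 2 * (y - rho).
    rewrite /y' /p0 -mulrBr !expr2.
    have : y * y - rho * rho = (y - rho) * (y + rho) by ring.
    move=> ->.
    have A : 0 <= y - rho by rewrite subr_ge0.
    have B : y + rho <= 2 by have := rho_le1; lra.
    have C : 0 <= (y - rho) * (y + rho) by apply: mulr_ge0 => //; have := ltW r0; lra.
    have E1 : h * ((y - rho) * (y + rho)) <= (y - rho) * (y + rho) by rewrite ler_piMl.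
    have E2 : (y - rho) * (y + rho) <= (y - rho) * 2 by apply: ler_wpM2l.
    lra.
  have d2 : y' ^+ 2 - p0 ^+ 2 <= 2 * (y' - p0).
    have : y' ^+ 2 - p0 ^+ 2 = (y' - p0) * (y' + p0) by ring.
    move=> ->.
    have A : 0 <= y' - p0 by rewrite subr_ge0.
    have E2 : (y' - p0) * (y' + p0) <= (y' - p0) * 2 by apply: ler_wpM2l => //; lra.
    lra.
  have : eps * p0 ^+ 2 / 2 = 4 * del by rewrite /del; field.
  move=> e2; rewrite e1 e2; lra.
set Q := 2 * (4 * D + 1)%:R / (eps * p0 ^+ 2).
exists (Num.truncn Q).+1 => a.
set K := (Num.truncn Q).+1.
have KQ : Q < K%:R := truncnS_gt Q.
set k := K%:R : R.
have k1 : 1 <= k by rewrite /k ler1n.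
have kD : (4 * D + 1)%:R <= k * (eps * p0 ^+ 2) / 2.
  have : Q * (eps * p0 ^+ 2) = 2 * (4 * D + 1)%:R.
    by rewrite /Q mulrAC -mulrA divff ?mulr1 // gt_eqF // mulr_gt0 // exprn_gt0.
  have pe : 0 < eps * p0 ^+ 2 by rewrite mulr_gt0 // exprn_gt0.
  move=> H; have := ltr_pM2r pe; move=> /(_ Q k) H2.
  have := KQ; rewrite -/k -H2 H => H3; lra.
set al := \sum_(i < K) fine (P (G (a + i%:Z))).
have alK : k * p0 <= al.
  have -> : k * p0 = \sum_(i < K) p0 by rewrite sumr_const card_ord /k mulr_natl.
  apply: ler_sum => i _.
  by apply: fineP_ge; [apply: mG | apply: PG_lb].
set S := \sum_(i < K) \sum_(j < K) fine (P (G (a + i%:Z) `&` G (a + j%:Z))).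
have SK : S <= k * (4 * D + 1)%:R + k * k * (h ^+ 2 * y ^+ 4).
  apply: le_trans (_ : S <= \sum_(i < K) ((4 * D + 1)%:R + k * (h ^+ 2 * y ^+ 4))) _.
    apply: ler_sum => i _.
    apply: le_trans (_ : _ <= \sum_(j < K) ((((i - 2 * D <= j) && (j < i + 2 * D + 1))%N : nat)%:R
                                + h ^+ 2 * y ^+ 4)) _.
      by apply: ler_sum => j _; apply: gg_bound.
    rewrite big_split /= lerD //.
      exact: near_count.
    by rewrite sumr_const card_ord -mulr_natl.
  rewrite sumr_const card_ord -mulr_natl -/k le_eqVlt; apply/orP; left; apply/eqP; ring.
have SM := second_moment a K.
rewrite -/al -/S in SM.
have al0 : 0 < al by apply: lt_le_trans alK; rewrite mulr_gt0 // (lt_le_trans ltr01 k1).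
have al2 : k * k * p0 ^+ 2 <= al ^+ 2.
  rewrite (_ : k * k * p0 ^+ 2 = (k * p0) ^+ 2); last by ring.
  have kp0 : 0 <= k * p0 by apply: mulr_ge0; [apply: (le_trans ler01 k1)|apply: ltW].
  by rewrite !expr2; apply: ler_pM.
have kk : 0 <= k * k by apply: mulr_ge0; apply: (le_trans ler01 k1).
have t1 : k * k * (h ^+ 2 * y ^+ 4) <= k * k * p0 ^+ 2 + eps * (k * k * p0 ^+ 2) / 2.
  have -> : k * k * p0 ^+ 2 + eps * (k * k * p0 ^+ 2) / 2 =
            k * k * (p0 ^+ 2 + eps * p0 ^+ 2 / 2) by ring.
  by apply: ler_wpM2l.
have t2 : k * (4 * D + 1)%:R <= eps * (k * k * p0 ^+ 2) / 2.
  have -> : eps * (k * k * p0 ^+ 2) / 2 = k * (k * (eps * p0 ^+ 2) / 2) by ring.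
  by apply: ler_wpM2l => //; apply: (le_trans ler01 k1).
have t3 : eps * (k * k * p0 ^+ 2) <= eps * al ^+ 2 by apply: ler_wpM2l => //; apply: ltW.
have aux : forall Cpz S C E epsE epsC A B : R, Cpz <= S - C -> S <= A + B ->
    B <= E + epsE / 2 -> A <= epsE / 2 -> epsE <= epsC -> E <= C -> Cpz <= epsC.
  by move=> *; lra.
have main := aux _ _ _ _ _ _ _ _ SM SK t1 t2 t3 al2.
rewrite -(ler_pM2l (exprn_gt0 2 al0)) [X in _ <= X]mulrC.
exact: main.
Qed.

Lemma null_lemma A : measurable A ->
  (forall eps, 0 < eps -> exists B, [/\ measurable B, A `<=` B & fine (P B) <= eps]) ->
  P A = 0%E.
Proof.
move=> mA H; rewrite (Pfin mA); congr (_%:E).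
have f0 : 0 <= fine (P A) by apply: fine_ge0; apply: Pge0.
apply/eqP; rewrite eq_le f0 andbT; apply/negP => /negP; rewrite -ltNge => fp.
have [B [mB AB HB]] := H (fine (P A) / 2) (divr_gt0 fp (ltr0Sn _ 1)).
have : fine (P A) <= fine (P B).
  by apply: fineP_ge => //; rewrite -Pfin //; apply: Ple.
lra.
Qed.

Definition Zr (n : nat) : set T := \bigcap_K Zwin (n%:Z + 1) K.
Definition Zl (n : nat) : set T := \bigcap_K Zwin (- n%:Z - K%:Z) K.

Lemma Zr_null n : P.-negligible (Zr n).
Proof.
have mZ : measurable (Zr n) by apply: bigcapT_measurable => K; apply: mZwin.
apply/negligibleP => //; apply: null_lemma => // eps eps0.
have [K HK] := window_small eps0.
exists (Zwin (n%:Z + 1) K); split => //; first exact: mZwin.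
by move=> w; apply.
Qed.

Lemma Zl_null n : P.-negligible (Zl n).
Proof.
have mZ : measurable (Zl n) by apply: bigcapT_measurable => K; apply: mZwin.
apply/negligibleP => //; apply: null_lemma => // eps eps0.
have [K HK] := window_small eps0.
exists (Zwin (- n%:Z - K%:Z) K); split => //; first exact: mZwin.
by move=> w; apply.
Qed.

Lemma final : {ae P, forall w : T,
     (forall n : nat, exists v : int, n%:Z < v /\ separator (eta0 ^~ w) v) /\
     (forall n : nat, exists v : int, v < - n%:Z /\ separator (eta0 ^~ w) v)}.
Proof.
apply: (@negligibleS _ _ _ _ ((\bigcup_n Zr n) `|` (\bigcup_n Zl n))).
  move=> w /= /not_andP [H|H].
    left; move: H => /existsNP [n Hn]; exists n => // K _ [i iK Gi].
    apply: Hn; exists (n%:Z + 1 + i%:Z); split => //; lia.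
  right; move: H => /existsNP [n Hn]; exists n => // K _ [i iK Gi].
  apply: Hn; exists (- n%:Z - K%:Z + i%:Z); split => //.
  move: iK; rewrite /= => iK; lia.
apply: negligibleU; apply: negligible_bigcup.
  exact: Zr_null.
exact: Zl_null.
Qed.

End Prob.

Unset Implicit Arguments.

Theorem mainTheorem17 (d : measure_display) (T : measurableType d)
  (R : realType) (P : probability T R) (eta0 : int -> T -> int)
  (rho_b rho_h : R) :
  rho_b < rho_h -> rho_b + rho_h <= 1 ->
  (forall (x v : int), measurable [set w | eta0 x w = v]) ->
  mutually_independent P eta0 ->
  (forall x : int, P [set w | eta0 x w = 1] = rho_b%:E) ->
  (forall x : int, P [set w | eta0 x w = -1] = rho_h%:E) ->
  (forall x : int, P [set w | eta0 x w = 0] = (1 - rho_b - rho_h)%:E) ->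
  {ae P, forall w : T,
     (forall n : nat, exists v : int, n%:Z < v /\ separator (eta0 ^~ w) v) /\
     (forall n : nat, exists v : int, v < - n%:Z /\ separator (eta0 ^~ w) v)}.
Proof.
move=> bh _ Hm Hind Hb Hh Hc.
exact: (final Hm Hind Hb Hh Hc bh).
Qed.
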